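(* Let $n\ge 7$ and let $G$ be a bicyclic graph on $n$ vertices. (1) $\mathrm{irr}_t(G)\ge 2n-4$. Equality holds if and only if the degree sequence of $G$ is $(3,3,2,\ldots,2)$, i.e. two vertices of degree $3$ and $n-2$ of degree $2$. (2) If the degree sequence of $G$ is not $(3,3,2,\ldots,2)$, then $\mathrm{irr}_t(G)\ge 2n-2$. Equality holds if and only if the degree sequence of $G$ is $(4,2,\ldots,2)$, i.e. one vertex of degree $4$ and $n-1$ of degree $2$. (3) If the degree sequence of $G$ is neither $(3,3,2,\ldots,2)$ nor $(4,2,\ldots,2)$, then $\mathrm{irr}_t(G)\ge 4n-10$. Equality holds if and only if the degree sequence of $G$ is $(3,3,3,2,\ldots,2,1)$, i.e. three vertices of degree $3$, $n-4$ of degree $2$ and one of degree $1$.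
   Context: A bicyclic graph is a simple connected graph whose number of edges equals its number of vertices plus one. For a graph $G=(V,E)$ and $w\in V$, $d_G(w)$ is the degree of $w$. The total irregularity is $\mathrm{irr}_t(G)=\frac12\sum_{x,y\in V}|d_G(x)-d_G(y)|$, where the sum runs over all ordered pairs of vertices. Degree sequences are listed in nonincreasing order. *)

(* Defs.v *)
From mathcomp Require Import all_boot.
Set Implicit Arguments. Unset Strict Implicit. Unset Printing Implicit Defensive.

Definition simple_graph (T : finType) (e : rel T) : Prop :=
  symmetric e /\ irreflexive e.

Definition connected_graph (T : finType) (e : rel T) : Prop :=
  forall x y : T, connect e x y.

Definition edges (T : finType) (e : rel T) : {set {set T}} :=
  [set [set x; y] | x in T, y in T & e x y].

Definition bicyclic (T : finType) (e : rel T) : Prop :=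
  [/\ simple_graph e, connected_graph e & #|edges e| = #|T|.+1].

Definition deg (T : finType) (e : rel T) (x : T) : nat := #|[set y | e x y]|.

Definition absdiff (m n : nat) : nat := (m - n) + (n - m).

Definition irrt (T : finType) (e : rel T) : nat :=
  (\sum_(x : T) \sum_(y : T) absdiff (deg e x) (deg e y)) ./2.

Definition degseq (T : finType) (e : rel T) : seq nat :=
  sort geq [seq deg e x | x <- enum T].

(* Main.v *)
Require Import Defs.
From mathcomp Require Import all_boot.
From mathcomp Require Import zify.

Lemma handshake (T : finType) (e : rel T) : symmetric e -> irreflexive e ->
  \sum_(x : T) deg e x = 2 * #|edges e|.
Proof.
move=> sym irr.
have h1 : \sum_(x : T) deg e x = \sum_(p : T * T | e p.1 p.2) 1.
  transitivity (\sum_(x : T) \sum_(y : T) (e x y : nat)).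
    apply: eq_bigr => x _; rewrite /deg -sum1_card big_mkcond /=.
    by apply: eq_bigr => y _; rewrite inE; case: (e x y).
  rewrite pair_big /= [RHS]big_mkcond /=.
  by apply: eq_bigr => p _; case: (e p.1 p.2).
rewrite h1 (partition_big (fun p : T * T => [set p.1; p.2]) (fun E => E \in edges e)).
  transitivity (\sum_(E in edges e) 2); last by rewrite sum_nat_const mulnC.
  apply: eq_bigr => E /imset2P [a b _ hab ->].
  move: hab; rewrite inE => /andP [_ hab].
  have nab : a != b by apply/eqP => Eab; move: hab; rewrite Eab irr.
  transitivity #|[set (a, b); (b, a)]|; last first.
    rewrite cards2; suff -> : (a, b) != (b, a) by [].
    by apply/eqP => -[Eab]; move/eqP: nab.
  rewrite -sum1_card; apply: eq_bigl => -[x y] /=; rewrite !inE.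
  apply/idP/idP.
    case/andP => hxy /eqP heq.
    have nxy : x != y by apply/eqP => Exy; move: hxy; rewrite Exy irr.
    have : x \in [set a; b] by rewrite -heq set21.
    have : y \in [set a; b] by rewrite -heq set22.
    rewrite !inE => hy hx.
    case/orP: hx => /eqP ?; case/orP: hy => /eqP ?; subst;
      rewrite ?eqxx ?orbT //; by rewrite eqxx in nxy.
  case/orP => /eqP [-> ->]; first by rewrite hab eqxx.
  rewrite sym hab /=; apply/eqP/setP => w; rewrite !inE orbC //.
move=> [x y] hxy; apply/imset2P; exists x y => //; by rewrite inE hxy.
Qed.

Lemma deg_pos (T : finType) (e : rel T) (x : T) : connected_graph e -> 1 < #|T| ->
  0 < deg e x.
Proof.
move=> hc hT.
have [y hy] : exists y, y != x.
  move: hT; rewrite (cardD1 x) inE => /card_gt0P [y]; rewrite inE => /andP [h _].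
  by exists y.
case/connectP: (hc x y) => p; case: p => [|z p] /=.
  by move=> _ Eyx; rewrite Eyx eqxx in hy.
case/andP => hxz _ _; apply/card_gt0P; exists z; by rewrite inE.
Qed.

Definition D (s : seq nat) := \sum_(a <- s) \sum_(b <- s) absdiff a b.

Lemma sum_nseq (k a : nat) (F : nat -> nat) : \sum_(i <- nseq k a) F i = k * F a.
Proof. elim: k => [|k IH]; first by rewrite big_nil. by rewrite /= big_cons IH mulSn. Qed.

Lemma D_perm s t : perm_eq s t -> D s = D t.
Proof.
move=> h; rewrite /D (perm_big _ h); apply: eq_bigr => a _; exact: perm_big.
Qed.

Definition P u := \sum_(b <- u) (b - 2).

Lemma sumn_u u : all (leq 3) u -> sumn u = P u + 2 * size u.
Proof.
rewrite /P; elim: u => [|a u IH] /=; first by rewrite big_nil.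
case/andP => ha hu; rewrite big_cons IH //; lia.
Qed.

Lemma sum2 u : all (leq 3) u -> \sum_(b <- u) absdiff 2 b = P u.
Proof.
rewrite /P; elim: u => [|a u IH] /=; first by rewrite !big_nil.
case/andP => ha hu; rewrite !big_cons IH // /absdiff; lia.
Qed.

Lemma sum1 u : all (leq 3) u -> \sum_(b <- u) absdiff 1 b = P u + size u.
Proof.
rewrite /P; elim: u => [|a u IH] /=; first by rewrite !big_nil.
case/andP => ha hu; rewrite !big_cons IH // /absdiff; lia.
Qed.

Lemma sumu z N u (G : nat -> nat) : all (leq 3) u ->
  \sum_(a <- u) (z * absdiff a 2 + N * absdiff a 1 + G a)
   = z * P u + N * (P u + size u) + \sum_(a <- u) G a.
Proof.
rewrite /P; elim: u => [|a u IH] /=; first by rewrite !big_nil !muln0.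
case/andP => ha hu; rewrite !big_cons IH //.
have -> : absdiff a 2 = a - 2 by rewrite /absdiff; lia.
have -> : absdiff a 1 = a - 2 + 1 by rewrite /absdiff; lia.
rewrite !mulnDr; lia.
Qed.

Lemma D_formula z N u : all (leq 3) u ->
  D (nseq z 2 ++ nseq N 1 ++ u) =
  2 * z * N + 2 * z * P u + 2 * N * (P u + size u) + D u.
Proof.
move=> hu; rewrite /D.
under eq_bigr => a _ do rewrite !big_cat /= !sum_nseq.
rewrite !big_cat /= !sum_nseq sum2 // sum1 //.
under eq_bigr => a _ do rewrite (addnA (z * _)).
rewrite sumu //.
rewrite /absdiff /=; lia.
Qed.

Lemma decomp s : all (fun x => 0 < x) s ->
  perm_eq s (nseq (count (pred1 2) s) 2 ++ nseq (count (pred1 1) s) 1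
             ++ filter (leq 3) s).
Proof.
move=> hs; apply/permP => a; elim: s hs => [|x s IH] //= /andP [hx hs].
move: (IH hs); rewrite !count_cat !count_nseq /= => ->.
case: x hx => [|[|[|x]]] //= _; case: (a 1); case: (a 2) => /=; lia.
Qed.

Lemma geq_tot : total geq. Proof. move=> a b /=; lia. Qed.
Lemma geq_tr : transitive geq. Proof. move=> a b c /=; lia. Qed.
Lemma geq_anti : antisymmetric geq. Proof. move=> a b /=; lia. Qed.

Lemma sort_eq L ds : perm_eq L ds -> sorted geq ds -> sort geq L = ds.
Proof.
move=> hp hs; rewrite -[RHS](sorted_sort geq_tr hs).
by apply/(perm_sortP geq_tot geq_tr geq_anti).
Qed.

Lemma sort_neq k L ds : count (pred1 k) L != count (pred1 k) ds -> sort geq L <> ds.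
Proof.
move=> h E; have : perm_eq (sort geq L) L by rewrite perm_sort.
rewrite E perm_sym => /permP /(_ (pred1 k)) hk; by rewrite hk eqxx in h.
Qed.

Lemma path_nseq x y k : y <= x -> path geq x (nseq k y).
Proof.
elim: k x => [|k IH] x hyx //=; apply/andP; split => //; exact: IH.
Qed.

Lemma path_nseq1 x k : 2 <= x -> path geq x (nseq k 2 ++ [:: 1]).
Proof.
elim: k x => [|k IH] x hx /=; first by rewrite andbT; lia.
apply/andP; split => //; exact: IH.
Qed.

Lemma count0 k u : k < 3 -> all (leq 3) u -> count (pred1 k) u = 0.
Proof.
move=> hk; elim: u => [|a u IH] //= /andP [ha hu]; rewrite IH //.
have : (a == k) = false by apply/eqP; lia.
by move=> ->.
Qed.

Lemma half_ge X Q : X <= (2 * X + Q)./2.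
Proof. rewrite -divn2; lia. Qed.

Lemma half_eq X Q : (2 * X + 2 * Q)./2 = X + Q.
Proof. rewrite -divn2; lia. Qed.

Lemma P_ge u : all (leq 3) u -> size u <= P u.
Proof.
rewrite /P; elim: u => [|a u IH] /=; first by rewrite big_nil.
case/andP => ha hu; rewrite big_cons; move: (IH hu); lia.
Qed.

Definition Concl (n : nat) (I : nat) (ds : seq nat) :=
  let ds1 := [:: 3; 3] ++ nseq (n - 2) 2 in
  let ds2 := [:: 4] ++ nseq (n - 1) 2 in
  let ds3 := [:: 3; 3; 3] ++ nseq (n - 4) 2 ++ [:: 1] in
  (I = 2 * n - 4 /\ ds = ds1) \/ (I = 2 * n - 2 /\ ds = ds2 /\ ds <> ds1) \/
  (I = 4 * n - 10 /\ ds = ds3 /\ ds <> ds1 /\ ds <> ds2) \/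
  (4 * n - 9 <= I /\ ds <> ds1 /\ ds <> ds2 /\ ds <> ds3).

Ltac cnt k := apply: (sort_neq k); rewrite !count_cat !count_nseq /=; apply/eqP; lia.

Lemma comb2 (n z N : nat) (u : seq nat) : 7 <= n -> z + N + size u = n ->
  all (leq 3) u -> 2 * z + N + sumn u = 2 * n + 2 ->
  Concl n (D (nseq z 2 ++ nseq N 1 ++ u))./2 (sort geq (nseq z 2 ++ nseq N 1 ++ u)).
Proof.
move=> hn hsz hu hs; rewrite sumn_u // in hs.
have hP : P u = N + 2 by lia.
have hD := D_formula z N u hu; rewrite hP in hD.
have hp := P_ge u hu; rewrite hP in hp.
have c1 : count (pred1 1) (nseq z 2 ++ nseq N 1 ++ u) = N.
  by rewrite !count_cat !count_nseq count0 //=; lia.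
have [N0|[N1|N2]] : N = 0 \/ N = 1 \/ 2 <= N by lia.
- subst N; case: u hu hsz hs hP hD hp c1 => [|a [|b [|c u]]] /= hu hsz hs hP hD hp c1; try lia; try (rewrite /P big_nil in hP; lia).
  +
    rewrite /P big_cons big_nil in hP.
    have ha : a = 4 by lia. subst a.
    have Du : D [:: 4] = 0 by rewrite /D !big_cons !big_nil.
    rewrite /Concl; right; left; split; first by rewrite hD Du -divn2; lia.
    split; last by cnt 4.
    apply: sort_eq; last by rewrite /= path_nseq.
    rewrite (_ : n - 1 = z); last by lia.
    apply/permP => x; rewrite !count_cat !count_nseq /=; case: (x 2); lia.
  + rewrite /P !big_cons big_nil in hP.
    move: hu => /and3P [ha hb _].
    have ha' : a = 3 by lia. have hb' : b = 3 by lia. subst a b.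
    have Du : D [:: 3; 3] = 0 by rewrite /D !big_cons !big_nil.
    rewrite /Concl; left; split; first by rewrite hD Du -divn2; lia.
    apply: sort_eq; last by rewrite /= path_nseq.
    rewrite (_ : n - 2 = z); last by lia.
    apply/permP => x; rewrite !count_cat !count_nseq /=; case: (x 2); lia.
- subst N; case: u hu hsz hs hP hD hp c1 => [|a [|b [|c [|d u]]]] /= hu hsz hs hP hD hp c1; try lia; try (rewrite /P big_nil in hP; lia).
  + rewrite /P big_cons big_nil in hP.
    have ha : a = 5 by lia. subst a.
    have Du : D [:: 5] = 0 by rewrite /D !big_cons !big_nil.
    rewrite /Concl; right; right; right; split; first by rewrite hD Du -divn2; lia.
    split; first by cnt 1. split; first by cnt 1. by cnt 3.
  + rewrite /P !big_cons big_nil in hP.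
    move: hu => /and3P [ha hb _].
    have Du : D [:: a; b] = 2 by rewrite /D !big_cons !big_nil /absdiff; lia.
    rewrite /Concl; right; right; right; split; first by rewrite hD Du -divn2; lia.
    split; first by cnt 1. split; first by cnt 1.
    apply: (sort_neq 3); rewrite !count_cat !count_nseq /=; apply/eqP.
    case: (a == 3); case: (b == 3) => /=; lia.
  + rewrite /P !big_cons big_nil in hP.
    move: hu => /and4P [ha hb hc _].
    have ha' : a = 3 by lia. have hb' : b = 3 by lia. have hc' : c = 3 by lia.
    subst a b c.
    have Du : D [:: 3; 3; 3] = 0 by rewrite /D !big_cons !big_nil.
    rewrite /Concl; right; right; left; split; first by rewrite hD Du -divn2; lia.
    split; last by split; cnt 1.
    apply: sort_eq; last by rewrite /= path_nseq1.
    rewrite (_ : n - 4 = z); last by lia.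
    apply/permP => x; rewrite !count_cat !count_nseq /=; case: (x 2); case: (x 1); lia.
- rewrite /Concl; right; right; right; split.
    set X := z * N + z * (N + 2) + N * (N + 2 + size u).
    have hX : 4 * n - 9 <= X.
      rewrite /X; have [E|[E|h4]] : N = 2 \/ N = 3 \/ 4 <= N by lia.
      * subst N; lia.
      * subst N; lia.
      * have h1 : 4 * (N + 2 + size u) <= N * (N + 2 + size u) by apply: leq_mul.
        have h2 : z * 4 <= z * (N + 2) by apply: leq_mul => //; lia.
        lia.
    apply: leq_trans hX _.
    rewrite hD (_ : 2 * z * N + 2 * z * (N + 2) + 2 * N * (N + 2 + size u) + D u
       = 2 * X + D u); last by rewrite /X; lia.
    exact: half_ge.
  split; first by apply: (sort_neq 1); rewrite c1 !count_cat !count_nseq /=; apply/eqP; lia.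
  split; first by apply: (sort_neq 1); rewrite c1 !count_cat !count_nseq /=; apply/eqP; lia.
  by apply: (sort_neq 1); rewrite c1 !count_cat !count_nseq /=; apply/eqP; lia.
Qed.

Lemma final (n I : nat) (ds : seq nat) : 7 <= n -> Concl n I ds ->
  let ds1 := [:: 3; 3] ++ nseq (n - 2) 2 in
  let ds2 := [:: 4] ++ nseq (n - 1) 2 in
  let ds3 := [:: 3; 3; 3] ++ nseq (n - 4) 2 ++ [:: 1] in
  [/\ (2 * n - 4 <= I /\ (I = 2 * n - 4 <-> ds = ds1)),
      (ds <> ds1 ->
         2 * n - 2 <= I /\ (I = 2 * n - 2 <-> ds = ds2)) &
      (ds <> ds1 -> ds <> ds2 ->
         4 * n - 10 <= I /\ (I = 4 * n - 10 <-> ds = ds3))].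
Proof.
move=> hn H ds1 ds2 ds3; rewrite /Concl -/ds1 -/ds2 -/ds3 in H.
case: H => [[hI hd]|[[hI [hd h1]]|[[hI [hd [h1 h2]]]|[hI [h1 [h2 h3]]]]]];
  (split; [split; [first [lia|congruence]|split => h; first [lia|congruence]]
          | move=> ?; split; [first [lia|congruence]|split => h; first [lia|congruence]]
          | move=> ? ?; split; [first [lia|congruence]|split => h; first [lia|congruence]]]).
Qed.

Theorem theorem15 (n : nat) (T : finType) (e : rel T) :
  #|T| = n -> 7 <= n -> bicyclic e ->
  let ds1 := [:: 3; 3] ++ nseq (n - 2) 2 in
  let ds2 := [:: 4] ++ nseq (n - 1) 2 in
  let ds3 := [:: 3; 3; 3] ++ nseq (n - 4) 2 ++ [:: 1] in
  [/\ (2 * n - 4 <= irrt e /\ (irrt e = 2 * n - 4 <-> degseq e = ds1)),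
      (degseq e <> ds1 ->
         2 * n - 2 <= irrt e /\ (irrt e = 2 * n - 2 <-> degseq e = ds2)) &
      (degseq e <> ds1 -> degseq e <> ds2 ->
         4 * n - 10 <= irrt e /\ (irrt e = 4 * n - 10 <-> degseq e = ds3))].
Proof.
move=> hT hn [[sym irr] hc hE].
set s := [seq deg e x | x <- enum T].
have hsz : size s = n by rewrite size_map -cardE.
have hpos : all (fun x => 0 < x) s.
  rewrite all_map; apply/allP => x _ /=; apply: deg_pos hc _; lia.
have hsum : sumn s = 2 * n + 2.
  rewrite sumnE big_map big_enum /= (@handshake T e sym irr) hE hT; lia.
have hirr : irrt e = (D s)./2.
  rewrite /irrt /D big_map big_enum /=; congr (_./2); apply: eq_bigr => x _.
  by rewrite big_map big_enum.
have hdeg : degseq e = sort geq s by []. clearbody s.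
have hp := decomp s hpos.
have hD : D s = D (nseq (count (pred1 2) s) 2 ++ nseq (count (pred1 1) s) 1
             ++ filter (leq 3) s) by apply: D_perm.
have hS : sort geq s = sort geq (nseq (count (pred1 2) s) 2 ++ nseq (count (pred1 1) s) 1
             ++ filter (leq 3) s) by apply/(perm_sortP geq_tot geq_tr geq_anti).
have hsz' := perm_size hp; rewrite hsz !size_cat !size_nseq in hsz'.
have hsum' : sumn s = sumn (nseq (count (pred1 2) s) 2 ++ nseq (count (pred1 1) s) 1
             ++ filter (leq 3) s) by rewrite !sumnE; apply: perm_big.
rewrite hsum !sumn_cat !sumnE !sum_nseq -sumnE in hsum'.
have hu : all (leq 3) (filter (leq 3) s) by apply: filter_all.
rewrite hirr hdeg hD hS; apply: final => //; apply: comb2 => //. by rewrite hsz' addnA. by rewrite hsum' muln1 addnA (mulnC 2).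
Qed.
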